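(* Let $p \geq 5$ and $g \geq 2$ be integers such that $F = \frac{8(g-1)}{p-4}$ is a positive integer divisible by $4$. Then the closed orientable surface $S_g$ of genus $g$ admits a tiling $Y$ by $F$ copies of a regular right-angled hyperbolic $p$-gon whose closed geodesics $h_1, \ldots, h_n$ can be oriented so that $\sum_i [h_i] = 0$ in $H_1(S_g;\mathbb{Z})$.
   Context: In such a tiling four tiles meet at each vertex. The edges of $Y$ are partitioned into closed geodesics: closed curves made of edges of $Y$ passing straight through each vertex they meet, two geodesics (possibly the same) crossing at right angles at each vertex. *)

(* Defs.v *)
(* Combinatorial model of a tiling of a closed orientable
   surface by right-angled regular p-gons, via an oriented combinatorial map
   (rotation system) on a finite set of darts (half-edges). *)
From mathcomp Require Import all_boot all_fingroup all_algebra.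
Set Implicit Arguments. Unset Strict Implicit. Unset Printing Implicit Defensive.

Section Maps.
Variable D : finType.

(* s : rotation of darts around their vertex; a : edge involution.
   A dart d is viewed as the edge oriented away from its vertex. *)

(* face permutation: d |-> s (a d) : the next dart along the boundary of the
   face that traverses d positively.  (perm product is left-to-right.) *)
Definition face_perm (s a : {perm D}) : {perm D} := (a * s)%g.

Definition num_vertices (s : {perm D}) : nat := fcard s D.
Definition num_edges (a : {perm D}) : nat := fcard a D.
Definition num_faces (s a : {perm D}) : nat := fcard (face_perm s a) D.

Definition map_connected (s a : {perm D}) : Prop :=
  forall x y : D, connect (fun u v => (v == s u) || (v == a u)) x y.

(* A tiling of the closed orientable surface of genus g by F regular
   right-angled p-gons: every vertex has degree 4 (four right angles),
   every face is a p-gon, there are F faces, and the Euler characteristic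
   V - E + F equals 2 - 2g. *)
Definition rr_tiling (s a : {perm D}) (p g F : nat) : Prop :=
  (forall d, a (a d) = d) /\
  (forall d, a d != d) /\
  map_connected s a /\
  (forall d, fingraph.order s d = 4) /\
  (forall d, fingraph.order (face_perm s a) d = p) /\
  num_faces s a = F /\
  num_vertices s + num_faces s a + 2 * g = num_edges a + 2.

(* Straight continuation through a degree-4 vertex: the geodesic entering the
   head of d leaves along the opposite dart s (s (a d)).  An orientation of
   all closed geodesics = a choice O of exactly one dart per edge, closed
   under this straight continuation. *)
Definition geodesic_orientation (s a : {perm D}) (O : {set D}) : Prop :=
  (forall d, (d \in O) != (a d \in O)) /\
  (forall d, d \in O -> s (s (a d)) \in O).

(* The integral 1-chain  sum_i [h_i] : value +1 on darts in O, -1 on the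
   reversed darts. *)
Definition geodesic_chain (O : {set D}) (d : D) : int :=
  if d \in O then 1%R else (-1)%R.

(* A (cellular) 1-chain is null-homologous iff it is the boundary of an
   integral 2-chain c (c constant on faces = face-permutation orbits);
   boundary of c evaluated on dart d = c(face left of d) - c(face left of a d). *)
Definition null_homologous (s a : {perm D}) (z : D -> int) : Prop :=
  exists c : D -> int,
    (forall d, c (face_perm s a d) = c d) /\
    (forall d, z d = (c d - c (a d))%R).

End Maps.

(* Main.v *)
Require Import Defs.
From mathcomp Require Import all_boot all_fingroup all_algebra.
From mathcomp Require Import zify.
Set Implicit Arguments. Unset Strict Implicit. Unset Printing Implicit Defensive.

Section Mod.
Variable n : nat.
Local Notation T := 'I_n.+1.

Lemma vinord m : m <= n -> nat_of_ord (inord m : T) = m.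
Proof. by move=> h; rewrite /= inordK. Qed.

Definition mS (i : T) : T := inord (if nat_of_ord i == n then 0 else (nat_of_ord i).+1).
Definition mP (i : T) : T := inord (if nat_of_ord i == 0 then n else (nat_of_ord i).-1).
Definition mN (i : T) : T := inord (if nat_of_ord i == 0 then 0 else n.+1 - nat_of_ord i).

Lemma val_mS i : nat_of_ord (mS i) = if nat_of_ord i == n then 0 else (nat_of_ord i).+1.
Proof. move: (ltn_ord i) => h; rewrite vinord; case: ifP => /eqP; lia. Qed.
Lemma val_mP i : nat_of_ord (mP i) = if nat_of_ord i == 0 then n else (nat_of_ord i).-1.
Proof. move: (ltn_ord i) => h; rewrite vinord; case: ifP => /eqP; lia. Qed.
Lemma val_mN i : nat_of_ord (mN i) = if nat_of_ord i == 0 then 0 else n.+1 - nat_of_ord i.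
Proof. move: (ltn_ord i) => h; rewrite vinord; case: ifP => /eqP; lia. Qed.

Ltac vsimp := rewrite ?(val_mS, val_mP, val_mN).
Ltac ifs := repeat match goal with
 | |- context [if ?b then _ else _] =>
   lazymatch b with context [if _ then _ else _] => fail | _ => let E := fresh "E" in case E: b end end.

Lemma mNK : involutive mN.
Proof. move=> i; apply: val_inj => /=; have := ltn_ord i; vsimp; ifs; lia. Qed.
Lemma mSK : cancel mS mP.
Proof. move=> i; apply: val_inj => /=; have := ltn_ord i; vsimp; ifs; lia. Qed.
Lemma mPK : cancel mP mS.
Proof. move=> i; apply: val_inj => /=; have := ltn_ord i; vsimp; ifs; lia. Qed.
Lemma mNSN i : mN (mS (mN i)) = mP i.
Proof. apply: val_inj => /=; have := ltn_ord i; vsimp; ifs; lia. Qed.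

Lemma iter_mS m (i : T) : m <= n.+1 ->
  nat_of_ord (iter m mS i) = if nat_of_ord i + m <= n then nat_of_ord i + m else nat_of_ord i + m - n.+1.
Proof.
move: (ltn_ord i) => hi; elim: m => [|m IH] /= hm; first by rewrite addn0 ifT //; lia.
rewrite val_mS IH; last lia.
ifs; lia.
Qed.
End Mod.

Lemma order_eq (T : finType) (f : T -> T) (finj : injective f) x n :
  iter n.+1 f x = x -> (forall m, 0 < m <= n -> iter m f x != x) ->
  fingraph.order f x = n.+1.
Proof.
move=> hn hm; apply/eqP; rewrite eqn_leq; apply/andP; split.
  have cyc : fcycle f (traject f x n.+1).
    rewrite trajectS /= rcons_path fpath_traject /= last_traject.
    by rewrite -iterS hn.
  have := @order_le_cycle T f (traject f x n.+1) cyc x.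
  by rewrite size_traject; apply; rewrite trajectS mem_head.
rewrite leqNgt; apply/negP => lt.
have h0 := fingraph.iter_order finj x.
have h1 := fingraph.order_gt0 f x.
have := hm (fingraph.order f x); rewrite h1 /= -ltnS lt h0 eqxx.
by move/(_ isT).
Qed.

Lemma fcard_gen (T : finType) (f : T -> T) n : injective f ->
  (forall x, fingraph.order f x = n) -> fcard f T * n = #|T|.
Proof.
move=> fi ho; apply: fcard_order_set => //.
by apply/subsetP => x _; rewrite inE ho.
Qed.

Section Generic.
Variables (H : finType) (q : nat).
Local Notation I := 'I_q.+1.
Variables (M : I -> {perm H}) (N : I -> H -> H) (c : bool -> H -> int).
Hypothesis HM : forall i h, M (mP i) (N i h) = M i h.
Hypothesis HN2 : forall i h, N i (N i h) = h.
Hypothesis HN1 : forall i h, N i h != h.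

Local Notation Dt := (bool * H * I)%type.
Definition af (x : Dt) : Dt := let: (t, h, i) := x in
  if t then (false, (M (mN i))^-1%g h, mN i) else (true, M i h, mN i).
Lemma afK : involutive af.
Proof. case=> [[[|] h] i]; rewrite /af /= mNK ?permK ?permKV //. Qed.
Definition ap : {perm Dt} := perm (can_inj afK).
Definition pf (x : Dt) : Dt := let: (t, h, i) := x in (t, h, mS i).
Definition pfi (x : Dt) : Dt := let: (t, h, i) := x in (t, h, mP i).
Lemma pfK : cancel pf pfi. Proof. by case=> [[t h] i] /=; rewrite mSK. Qed.
Definition pp : {perm Dt} := perm (can_inj pfK).
Definition sp : {perm Dt} := (ap * pp)%g.
Lemma apE x : ap x = af x. Proof. by rewrite permE. Qed.
Lemma ppE x : pp x = pf x. Proof. by rewrite permE. Qed.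
Lemma spE x : sp x = pf (af x). Proof. by rewrite permM !permE. Qed.
Lemma face_sp : face_perm sp ap = pp.
Proof. by apply/permP => x; rewrite /face_perm !permM !permE afK. Qed.

Lemma s2F h i : sp (sp (false, h, i)) = (false, N i h, i).
Proof.
rewrite !spE /af /pf /= mNSN mPK; congr (_, _, _).
by rewrite -HM permK.
Qed.

Lemma sp_true g j : exists h i, (true, g, j) = sp (false, h, i).
Proof.
exists ((M (mN (mP j)))^-1%g g), (mN (mP j)).
by rewrite spE /af /pf /= permKV mNK mPK.
Qed.

Lemma Dcases (x : Dt) : exists h i, x = (false, h, i) \/ x = sp (false, h, i).
Proof.
case: x => [[[|] g] j].
  by have [h [i e]] := sp_true g j; exists h, i; right.
by exists g, j; left.
Qed.

Lemma iter_sp m x : iter m sp (sp x) = sp (iter m sp x).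
Proof. by rewrite -iterSr iterS. Qed.

Lemma iter4F h i : iter 4 sp (false, h, i) = (false, h, i).
Proof. by rewrite /= !s2F HN2. Qed.
Lemma iterneF h i m : 0 < m <= 3 -> iter m sp (false, h, i) != (false, h, i).
Proof.
case: m => [|[|[|[|m]]]] //= _.
- by rewrite spE.
- rewrite s2F; apply/eqP; case=> e; move: (HN1 i h); by rewrite e eqxx.
- by rewrite s2F spE.
Qed.

Lemma order_sp x : fingraph.order sp x = 4.
Proof.
have spinj : injective sp := @perm_inj _ sp.
have [h [i [->|->]]] := Dcases x.
  by apply: order_eq => //; [apply: iter4F | apply: iterneF].
apply: order_eq => //; first by rewrite iter_sp iter4F.
by move=> m hm; rewrite iter_sp (inj_eq spinj) iterneF.
Qed.

Lemma order_ap x : fingraph.order ap x = 2.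
Proof.
apply: order_eq; first exact: perm_inj.
  by rewrite /= !apE afK.
case=> [|[|m]] //= _; rewrite apE.
by case: x => [[[|] h] i].
Qed.

Lemma iter_pp m t h i : iter m pp (t, h, i) = (t, h, iter m (@mS q) i).
Proof. by elim: m => //= m ->; rewrite ppE. Qed.

Lemma order_pp x : fingraph.order pp x = q.+1.
Proof.
case: x => [[t h] i].
apply: order_eq; first exact: perm_inj.
  rewrite iter_pp; congr (_, _, _); apply: val_inj.
  rewrite -[LHS]/(nat_of_ord (iter q.+1 (@mS q) i)) -[RHS]/(nat_of_ord i).
  move: (ltn_ord i) => hi; rewrite iter_mS //; case: ifP; lia.
move=> m hm; rewrite iter_pp; apply/eqP; case=> /(congr1 val).
rewrite -[LHS]/(nat_of_ord (iter m (@mS q) i)) -[RHS]/(nat_of_ord i).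
move: (ltn_ord i) => hi; rewrite iter_mS; last lia.
case: ifP; lia.
Qed.

Lemma card_Dt : #|{: Dt}| = 2 * #|H| * q.+1.
Proof. by rewrite !card_prod card_bool card_ord. Qed.



Definition Rel (u v : Dt) := (v == sp u) || (v == ap u).

Lemma cR_sp x : connect Rel x (sp x).
Proof. by apply: connect1; rewrite /Rel eqxx. Qed.
Lemma cR_ap x : connect Rel x (ap x).
Proof. by apply: connect1; rewrite /Rel eqxx orbT. Qed.
Lemma cR_pp x : connect Rel x (pp x).
Proof.
apply: connect_trans (cR_ap x) _.
have -> : pp x = sp (ap x) by rewrite spE ppE apE afK.
exact: cR_sp.
Qed.
Lemma cR_iter m x : connect Rel x (iter m pp x).
Proof.
elim: m => //= m IH; apply: connect_trans IH _; exact: cR_pp.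
Qed.
Lemma cR_idx t h i j : connect Rel (t, h, i) (t, h, j).
Proof.
set m := if nat_of_ord i <= j then j - i else j + q.+1 - i.
have := cR_iter m (t, h, i); rewrite iter_pp.
suff -> : iter m (@mS q) i = j by [].
apply: val_inj; rewrite -[LHS]/(nat_of_ord (iter m (@mS q) i)) -[RHS]/(nat_of_ord j).
move: (ltn_ord i) (ltn_ord j) => hi hj.
rewrite iter_mS /m; case: ifP; try case: ifP; lia.
Qed.
Lemma cR_N h i : connect Rel (false, h, i) (false, N i h, i).
Proof.
rewrite -s2F; apply: connect_trans (cR_sp _) _; exact: cR_sp.
Qed.

Definition Nrel (x y : H) := [exists i, y == N i x].
Hypothesis Hconn : forall h h', connect Nrel h h'.

Lemma cR_F h h' i i' : connect Rel (false, h, i) (false, h', i').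
Proof.
have /connectP [pth Hp ->] := Hconn h h'.
elim: pth h Hp i => [|y pth IH] h /=; first by move=> _ i; apply: cR_idx.
case/andP => /existsP [k /eqP ->] Hp i.
apply: connect_trans (cR_idx _ _ i k) _.
apply: connect_trans (cR_N h k) _.
exact: IH.
Qed.

Lemma conn_all : map_connected sp ap.
Proof.
move=> x y.
have [x' cx] : exists x', (x'.1.1 = false) /\ connect Rel x x'.
  case: x => [[[|] h] i]; last by exists (false, h, i).
  by exists (af (true, h, i)); split; [| rewrite -apE; exact: cR_ap].
have [y' cy] : exists y', (y'.1.1 = false) /\ connect Rel y' y.
  case: y => [[[|] h] i]; last by exists (false, h, i).
  exists (af (true, h, i)); split; first by [].
  by rewrite -{2}[(true, h, i)]afK -!apE; apply: cR_ap.
case: cx cy => ex cx [ey cy].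
apply: connect_trans cx _; apply: connect_trans _ cy.
move: ex ey; case: x' => [[t h] i] /= ->; case: y' => [[t' h'] i'] /= ->.
exact: cR_F.
Qed.

Local Open Scope ring_scope.
Hypothesis Hadj : forall i h,
  (c false h - c true (M i h) == 1) || (c false h - c true (M i h) == -1).
Hypothesis Hvert : forall i h,
  c false h + c false (N i h) = c true (M i h) + c true (M i (N i h)).

Definition cc (x : Dt) : int := c x.1.1 x.1.2.
Lemma cc_pf x : cc (pf x) = cc x. Proof. by case: x => [[t h] i]. Qed.
Lemma cc_sp x : cc (sp x) = cc (ap x). Proof. by rewrite spE cc_pf apE. Qed.

Lemma zpm x : (cc x - cc (ap x) == 1) || (cc x - cc (ap x) == -1).
Proof.
rewrite apE; case: x => [[[|] g] j]; rewrite /cc /=; last exact: Hadj.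
have := Hadj (mN j) ((M (mN j))^-1%g g); rewrite permKV.
by case/orP => /eqP e; apply/orP; [right|left]; apply/eqP; lia.
Qed.

Lemma vertF h i : cc (false, h, i) + cc (sp (sp (false, h, i))) =
  cc (sp (false, h, i)) + cc (sp (sp (sp (false, h, i)))).
Proof.
rewrite !s2F !cc_sp !apE /cc /=; exact: Hvert.
Qed.

Lemma vert x : cc x + cc (sp (sp x)) = cc (sp x) + cc (sp (sp (sp x))).
Proof.
have [h [i [->|->]]] := Dcases x; first exact: vertF.
have e4 := iter4F h i; rewrite /= in e4; rewrite e4.
have := vertF h i; lia.
Qed.

Definition Oset : {set Dt} := [set x | cc x - cc (ap x) == 1].

Lemma apap y : ap (ap y) = y. Proof. by rewrite !apE afK. Qed.

Lemma geo : geodesic_orientation sp ap Oset.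
Proof.
split=> [d|d]; rewrite !inE ?apap.
  have := zpm d.
  case/orP => /eqP e.
    by rewrite e; have -> : cc (ap d) - cc d = -1 by lia.
  by rewrite e; have -> : cc (ap d) - cc d = 1 by lia.
move=> /eqP hd.
have := vert (ap d); rewrite (cc_sp (ap d)) apap => hv.
have e3 : cc (ap (sp (sp (ap d)))) = cc (sp (sp (sp (ap d)))) by rewrite cc_sp.
apply/eqP; rewrite e3; lia.
Qed.

Lemma nullh : null_homologous sp ap (geodesic_chain Oset).
Proof.
exists cc; split=> [d|d]; first by rewrite face_sp ppE cc_pf.
rewrite /geodesic_chain inE; case: ifP => [/eqP -> //|/negbT ne].
by have := zpm d; rewrite (negbTE ne) /= => /eqP ->.
Qed.

Theorem gen_main (g : nat) : (4 <= q)%N -> (2 <= g)%N ->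
  (#|H| * (q.+1 - 4) = 4 * (g - 1))%N ->
  [/\ rr_tiling sp ap q.+1 g (2 * #|H|),
      geodesic_orientation sp ap Oset
    & null_homologous sp ap (geodesic_chain Oset)].
Proof.
move=> q4 g2 eH.
have cD := card_Dt.
have fV := fcard_gen (@perm_inj _ sp) order_sp.
have fE := fcard_gen (@perm_inj _ ap) order_ap.
have fF := fcard_gen (@perm_inj _ pp) order_pp.
have nF : num_faces sp ap = (2 * #|H|)%N.
  rewrite /num_faces face_sp; apply/eqP.
  by rewrite -(eqn_pmul2r (ltn0Sn q)) fF cD.
split; [|exact: geo|exact: nullh].
split; first exact: apap.
split; first by case=> [[[|] h] i]; rewrite apE.
split; first exact: conn_all.
split; first exact: order_sp.
split; first by move=> d; rewrite face_sp order_pp.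
split; first exact: nF.
rewrite nF /num_vertices /num_edges.
rewrite cD in fV fE.
move: fV fE eH; set X := #|H|; set V := fcard _ _; set E := fcard _ _.
rewrite mulnBr => fV fE eH.
nia.
Qed.

End Generic.

Ltac ifs2 := repeat match goal with
 | |- context [if ?b then _ else _] =>
   lazymatch b with context [if _ then _ else _] => fail | _ => let E := fresh "E" in case E: b end end.

Section Dih.
Variable n : nat.
Local Notation J := 'I_n.+1.
Definition tD (h : J * bool) : J * bool := (mN h.1, ~~ h.2).
Definition rinvD (h : J * bool) : J * bool := (mP h.1, h.2).
Definition rD (h : J * bool) : J * bool := (mS h.1, h.2).
Definition rhoD (h : J * bool) : J * bool := (mS (mN h.1), ~~ h.2).
Lemma tDK : involutive tD. Proof. by case=> j e; rewrite /tD /= mNK negbK. Qed.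
Lemma rhoDK : involutive rhoD. Proof. by case=> j e; rewrite /rhoD /= mNSN mPK negbK. Qed.
Lemma rinvDK : cancel rinvD rD. Proof. by case=> j e; rewrite /rinvD /rD /= mPK. Qed.
Lemma t_rho h : tD (rhoD h) = rinvD h. Proof. by case: h => j e; rewrite /tD /rhoD /rinvD /= mNSN negbK. Qed.
Lemma rinv_rho h : rinvD (rhoD h) = tD h. Proof. by case: h => j e; rewrite /tD /rhoD /rinvD /= mSK. Qed.
Lemma rho_t h : rhoD (tD h) = rD h. Proof. by case: h => j e; rewrite /tD /rhoD /rD /= mNK negbK. Qed.

Lemma iter_rD m : (m <= n)%N -> iter m rD (ord0, false) = (inord m, false).
Proof.
elim: m => [|m IH] hm /=; first by congr (_, _); apply: val_inj; rewrite /= inordK.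
rewrite IH; last lia.
rewrite /rD /=; congr (_, _); apply: val_inj.
rewrite -[LHS]/(nat_of_ord (mS (inord m : J))) val_mS /= inordK; last lia.
rewrite inordK; last lia.
case: ifP; lia.
Qed.
End Dih.

Section Even.
Variables (n q : nat).
Hypothesis q5 : (5 <= q)%N.
Hypothesis qodd : q %% 2 = 1.
Local Notation I := 'I_q.+1.
Local Notation HE := ('I_n.+1 * bool)%type.

Definition MEf (i : I) : HE -> HE :=
  if nat_of_ord i %% 2 == 1 then @tD n else if nat_of_ord i == 2 then @rinvD n else id.
Lemma MEf_inj i : injective (MEf i).
Proof.
rewrite /MEf; case: ifP => _; first exact: can_inj (@tDK n).
by case: ifP => _; [exact: can_inj (@rinvDK n) | exact: inj_id].
Qed.
Definition ME (i : I) : {perm HE} := perm (@MEf_inj i).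
Definition NE (i : I) : HE -> HE :=
  if (nat_of_ord i == 2) || (nat_of_ord i == 3) then @rhoD n else @tD n.
Definition cE (b : bool) (h : HE) : int := if b then Posz 1 else if h.2 then Posz 2 else Posz 0.

Lemma HME i h : ME (mP i) (NE i h) = ME i h.
Proof.
rewrite !permE /MEf /NE val_mP; move: (ltn_ord i) => hi.
ifs2; rewrite ?tDK ?t_rho ?rinv_rho //; lia.
Qed.
Lemma HNE2 i h : NE i (NE i h) = h.
Proof. by rewrite /NE; case: ifP => _; rewrite ?tDK ?rhoDK. Qed.
Lemma HNE1 i h : NE i h != h.
Proof.
rewrite /NE; case: h => j e; case: ifP => _; apply/eqP; case=> _; by case: e.
Qed.
Lemma NE2 i h : (NE i h).2 = ~~ h.2.
Proof. by rewrite /NE; case: ifP. Qed.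

Lemma HadjE i h : (cE false h - cE true (ME i h) == 1)%R || (cE false h - cE true (ME i h) == -1)%R.
Proof. by rewrite /cE; case: h.2. Qed.
Lemma HvertE i h : (cE false h + cE false (NE i h) = cE true (ME i h) + cE true (ME i (NE i h)))%R.
Proof. by rewrite /cE NE2; case: h.2. Qed.

Lemma NrelE_sym : symmetric (Nrel NE).
Proof.
move=> x y; rewrite /Nrel; apply/existsP/existsP => [] [i /eqP ->]; exists i;
  by rewrite HNE2.
Qed.

Lemma HconnE h h' : connect (Nrel NE) h h'.
Proof.
have i0 : NE ord0 = @tD n by rewrite /NE /=.
have i2 : NE (inord 2) = @rhoD n by rewrite /NE inordK //=; lia.
have step x : connect (Nrel NE) x (rD x).
  apply: connect_trans (_ : connect _ x (tD x)) _.
    by apply: connect1; apply/existsP; exists ord0; rewrite i0.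
  by rewrite -rho_t; apply: connect1; apply/existsP; exists (inord 2); rewrite i2.
have base x : connect (Nrel NE) (ord0, false) x.
  have bF j : connect (Nrel NE) (ord0, false) (j, false).
    have -> : (j, false) = iter j (@rD n) (ord0, false).
      rewrite iter_rD; last by have := ltn_ord j; lia.
      by congr (_, _); rewrite inord_val.
    elim: (nat_of_ord j) => //= m IH; apply: connect_trans IH _; exact: step.
  case: x => j [|]; last exact: bF.
  apply: connect_trans (bF (mN j)) _.
  by apply: connect1; apply/existsP; exists ord0; rewrite i0 /tD /= mNK.
apply: connect_trans (base h').
by rewrite (sym_connect_sym NrelE_sym); apply: base.
Qed.
End Even.

Section Odd.
Variables (n q : nat).
Hypothesis q4 : (4 <= q)%N.
Hypothesis qeven : q %% 2 = 0.
Local Notation I := 'I_q.+1.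
Local Notation HO := ('I_n.+1 * bool * bool)%type.

Definition lift1 (f : 'I_n.+1 * bool -> 'I_n.+1 * bool) (h : HO) : HO := (f h.1, h.2).
Definition EO (h : HO) : HO := (h.1, ~~ h.2).
Definition teO (h : HO) : HO := (tD h.1, ~~ h.2).
Lemma lift1K f g : cancel f g -> cancel (lift1 f) (lift1 g).
Proof. by move=> K [x e]; rewrite /lift1 /= K. Qed.
Lemma EOK : involutive EO. Proof. by case=> x e; rewrite /EO /= negbK. Qed.
Lemma teOK : involutive teO. Proof. by case=> x e; rewrite /teO /= tDK negbK. Qed.

Definition MOf (i : I) : HO -> HO :=
  if nat_of_ord i == q then teO else if nat_of_ord i == 2 then lift1 (@rinvD n)
  else if nat_of_ord i %% 2 == 1 then lift1 (@tD n) else id.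
Lemma MOf_inj i : injective (MOf i).
Proof.
rewrite /MOf; case: ifP => _; first exact: can_inj teOK.
case: ifP => _; first exact: can_inj (lift1K (@rinvDK n)).
by case: ifP => _; [exact: can_inj (lift1K (@tDK n)) | exact: inj_id].
Qed.
Definition MO (i : I) : {perm HO} := perm (@MOf_inj i).
Definition NO (i : I) : HO -> HO :=
  if (nat_of_ord i == 2) || (nat_of_ord i == 3) then lift1 (@rhoD n)
  else if nat_of_ord i == q then EO else if nat_of_ord i == 0 then teO else lift1 (@tD n).
Definition cO (b : bool) (h : HO) : int :=
  if b then (if ~~ h.1.2 && h.2 then Posz 3 else Posz 1)
  else (if ~~ h.1.2 && ~~ h.2 then Posz 0 else Posz 2).

Lemma HMO i h : MO (mP i) (NO i h) = MO i h.
Proof.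
rewrite !permE /MOf /NO val_mP; move: (ltn_ord i) => hi.
case: h => [[j e] f].
ifs2; rewrite /lift1 /teO /EO /= ?tDK ?t_rho ?rinv_rho ?negbK //; try lia.
Qed.
Lemma HNO2 i h : NO i (NO i h) = h.
Proof.
case: h => [[j e] f].
rewrite /NO; ifs2; rewrite /lift1 /teO /EO /= ?tDK ?rhoDK ?negbK //.
Qed.
Lemma HNO1 i h : NO i h != h.
Proof.
case: h => [[j e] f].
rewrite /NO; ifs2; rewrite /lift1 /teO /EO /tD /rhoD /= !xpair_eqE;
  by case: e f => [] [] /=; rewrite ?andbF.
Qed.

Definition bits (h : HO) := (h.1.2, h.2).
Definition xor2 (u v : bool * bool) := (u.1 (+) v.1, u.2 (+) v.2).
Definition nbits (i : I) :=
  if (nat_of_ord i == 2) || (nat_of_ord i == 3) then (true, false)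
  else if nat_of_ord i == q then (false, true)
  else if nat_of_ord i == 0 then (true, true) else (true, false).
Definition mbits (i : I) :=
  if nat_of_ord i == q then (true, true) else if nat_of_ord i == 2 then (false, false)
  else if nat_of_ord i %% 2 == 1 then (true, false) else (false, false).
Definition allowed (nm : (bool * bool) * (bool * bool)) :=
  [|| (nm.1 == (true, false)) && (nm.2.2 == false),
      (nm.1 == (false, true)) && (nm.2 == (true, true))
    | (nm.1 == (true, true)) && (nm.2 == (false, false))].
Definition cOb (b e f : bool) : int :=
  if b then (if ~~ e && f then Posz 3 else Posz 1)
  else (if ~~ e && ~~ f then Posz 0 else Posz 2).
Lemma cOE b h : cO b h = cOb b (bits h).1 (bits h).2.
Proof. by []. Qed.

Lemma NO_bits i h : bits (NO i h) = xor2 (bits h) (nbits i).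
Proof.
case: h => [[j e] f]; rewrite /NO /nbits /bits /xor2.
case: ifP => _; [|case: ifP => _; [|case: ifP => _]];
  by rewrite /lift1 /EO /teO /tD /rhoD /= ?addbT ?addbF.
Qed.
Lemma MO_bits i h : bits (MO i h) = xor2 (bits h) (mbits i).
Proof.
case: h => [[j e] f]; rewrite permE /MOf /mbits /bits /xor2.
case: ifP => _; [|case: ifP => _; [|case: ifP => _]];
  by rewrite /lift1 /teO /tD /rinvD /= ?addbT ?addbF.
Qed.
Lemma allowed_i i : allowed (nbits i, mbits i).
Proof.
rewrite /nbits /mbits; move: (ltn_ord i) => hi.
ifs2 => //; lia.
Qed.

Lemma HadjO i h : (cO false h - cO true (MO i h) == 1)%R || (cO false h - cO true (MO i h) == -1)%R.
Proof.
rewrite !cOE MO_bits; have := allowed_i i.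
move: (nbits i) (mbits i) (bits h) => [a b] [c d] [e f].
by case: a b c d e f => [] [] [] [] [] [].
Qed.
Lemma HvertO i h : (cO false h + cO false (NO i h) = cO true (MO i h) + cO true (MO i (NO i h)))%R.
Proof.
rewrite !cOE !MO_bits !NO_bits; have := allowed_i i.
move: (nbits i) (mbits i) (bits h) => [a b] [c d] [e f].
by case: a b c d e f => [] [] [] [] [] [].
Qed.

Lemma NrelO_sym : symmetric (Nrel NO).
Proof.
move=> x y; rewrite /Nrel; apply/existsP/existsP => [] [i /eqP ->]; exists i;
  by rewrite HNO2.
Qed.

Lemma HconnO h h' : connect (Nrel NO) h h'.
Proof.
have i1 : NO (inord 1) = lift1 (@tD n) by rewrite /NO inordK //=; ifs2 => //; lia.
have i2 : NO (inord 2) = lift1 (@rhoD n) by rewrite /NO inordK //=; lia.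
have iq : NO (inord q) = EO by rewrite /NO inordK //= eqxx; ifs2 => //; lia.
have one i x : connect (Nrel NO) x (NO i x).
  by apply: connect1; apply/existsP; exists i.
have step x f : connect (Nrel NO) (x, f) (rD x, f).
  apply: connect_trans (one (inord 1) _) _; rewrite i1.
  by have := one (inord 2) (lift1 (@tD n) (x, f)); rewrite i2 /lift1 /= rho_t.
have base x : connect (Nrel NO) (ord0, false, false) x.
  have bF j : connect (Nrel NO) (ord0, false, false) (j, false, false).
    have -> : (j, false) = iter j (@rD n) (ord0, false).
      rewrite iter_rD; last by have := ltn_ord j; lia.
      by congr (_, _); rewrite inord_val.
    elim: (nat_of_ord j) => //= m IH; apply: connect_trans IH _; exact: step.
  have bF2 j e : connect (Nrel NO) (ord0, false, false) (j, e, false).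
    case: e; last exact: bF.
    apply: connect_trans (bF (mN j)) _.
    by have := one (inord 1) (mN j, false, false); rewrite i1 /lift1 /tD /= mNK.
  case: x => [[j e] [|]]; last exact: bF2.
  apply: connect_trans (bF2 j e) _.
  by have := one (inord q) (j, e, false); rewrite iq.
apply: connect_trans (base h').
by rewrite (sym_connect_sym NrelO_sym); apply: base.
Qed.
End Odd.

Lemma wrap (H : finType) (q : nat) (M : 'I_q.+1 -> {perm H}) (c : bool -> H -> int) g F :
  [/\ rr_tiling (sp M) (ap M) q.+1 g (2 * #|H|),
      geodesic_orientation (sp M) (ap M) (Oset M c)
    & null_homologous (sp M) (ap M) (geodesic_chain (Oset M c))] ->
  2 * #|H| = F ->
  exists (D : finType) (s a : {perm D}) (O : {set D}),
    [/\ rr_tiling s a q.+1 g F, geodesic_orientation s a O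
      & null_homologous s a (geodesic_chain O)].
Proof. by move=> h <-; exists _, (sp M), (ap M), (Oset M c). Qed.

Unset Implicit Arguments.
Set Strict Implicit.

Theorem proposition6p1 (p g : nat) :
  5 <= p -> 2 <= g ->
  (p - 4) %| 8 * (g - 1) -> 4 %| (8 * (g - 1)) %/ (p - 4) ->
  exists (D : finType) (s a : {perm D}) (O : {set D}),
    [/\ rr_tiling s a p g ((8 * (g - 1)) %/ (p - 4)),
        geodesic_orientation s a O
      & null_homologous s a (geodesic_chain O)].
Proof.
move=> p5 g2 dv d4.
have eF := divnK dv.
move: d4 eF; set F := (8 * (g - 1)) %/ (p - 4) => d4 eF.
have [k ek] : exists k, F = 4 * k by case/dvdnP: d4 => k ->; exists k; lia.
have [q eq] : exists q, p = q.+1 by exists p.-1; lia.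
subst p.
have q4 : 4 <= q by lia.
have k1 : 0 < k by rewrite ek in eF; nia.
have [qo|qe] : q %% 2 = 1 \/ q %% 2 = 0 by lia.
- have q5 : 5 <= q by lia.
  pose n := k.-1.
  have cH : #|{: 'I_n.+1 * bool}| = 2 * k by rewrite card_prod card_ord card_bool /n; lia.
  apply: (@wrap _ q (@ME n q) (@cE n)); last by rewrite cH ek; lia.
  apply: gen_main => //.
  + exact: HME.
  + exact: HNE2.
  + exact: HNE1.
  + exact: HconnE.
  + exact: HadjE.
  + exact: HvertE.
  + rewrite cH; rewrite ek in eF; nia.
- have ke : k %% 2 = 0.
    rewrite ek in eF.
    have e2 : k * (q - 3) = 2 * (g - 1) by nia.
    have : odd (k * (q - 3)) = false by rewrite e2 oddM.
    rewrite oddM oddB; last lia.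
    have oq : odd q = false by move: qe; rewrite modn2; case: (odd q).
    rewrite oq /= andbT => ok.
    by rewrite modn2 ok.
  pose n := (k %/ 2).-1.
  have cH : #|{: 'I_n.+1 * bool * bool}| = 2 * k.
    by rewrite !card_prod card_ord card_bool /n; lia.
  apply: (@wrap _ q (@MO n q) (@cO n)); last by rewrite cH ek; lia.
  apply: gen_main => //.
  + exact: HMO.
  + exact: HNO2.
  + exact: HNO1.
  + exact: HconnO.
  + exact: HadjO.
  + exact: HvertO.
  + rewrite cH; rewrite ek in eF; nia.
Qed.
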